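(* For any graph \(G\), \(OPT(G)\geq 2LP(G)-MM(G)\).
   Context: All graphs are finite, undirected and simple. \(OPT(G)\) is the minimum size of a vertex cover of \(G\) (a set of vertices containing at least one end-point of each edge). \(MM(G)\) is the size of a maximum matching of \(G\). \(LP(G)\) is the optimum value of the linear program: minimize \(\sum_{v\in V(G)}x_v\) subject to \(x_u+x_v\ge 1\) for every edge \(\{u,v\}\in E(G)\) and \(0\le x_v\le 1\) for every \(v\in V(G)\). *)

(* Defs.v *)
From HB Require Import structures.
From mathcomp Require Import all_boot all_order all_algebra.
From mathcomp Require Import classical_sets reals.
Set Implicit Arguments. Unset Strict Implicit. Unset Printing Implicit Defensive.
Import Order.TTheory GRing.Theory Num.Theory.

(* A finite simple graph: vertex type T : finType, edge relation e : rel T,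
   assumed symmetric and irreflexive (hypotheses of the theorem). *)
Section Graph.
Variables (T : finType) (e : rel T).

Definition vertex_cover (C : {set T}) : bool :=
  [forall u, forall v, e u v ==> (u \in C) || (v \in C)].

(* OPT(G): minimum size of a vertex cover (the full vertex set is one). *)
Definition OPT : nat :=
  \big[minn/#|T|]_(C : {set T} | vertex_cover C) #|C|.

(* A matching, given as a set of (oriented) edges, pairwise vertex-disjoint
   (so in particular an edge is not listed in both orientations). *)
Definition matching (M : {set T * T}) : bool :=
  [forall p in M, e p.1 p.2] &&
  [forall p in M, forall q in M,
     (p != q) ==> [&& p.1 != q.1, p.1 != q.2, p.2 != q.1 & p.2 != q.2]].

Definition MM : nat := \max_(M : {set T * T} | matching M) #|M|.

Definition LP_feasible (R : realType) (x : T -> R) : Prop :=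
  (forall u v, e u v -> 1 <= x u + x v)%R /\ (forall v, 0 <= x v <= 1)%R.

Definition LP (R : realType) : R :=
  inf [set s : R | exists x : T -> R, LP_feasible x /\ s = (\sum_(v : T) x v)%R].

End Graph.

(* Main.v *)
Require Import Defs.
From HB Require Import structures.
From mathcomp Require Import all_boot all_order all_algebra.
Import Order.TTheory GRing.Theory Num.Theory.
Set Implicit Arguments. Unset Strict Implicit. Unset Printing Implicit Defensive.

Section Konig.
Variables (T : finType) (e : rel T) (C : {set T}).

Definition hE a b := [&& e a b, a \in C & b \notin C].

Definition Hm (M : {set T * T}) : bool :=
  [forall p in M, hE p.1 p.2] &&
  [forall p in M, forall q in M, ((p.1 == q.1) || (p.2 == q.2)) ==> (p == q)].

Lemma HmP (M : {set T * T}) : reflect ((forall p, p \in M -> hE p.1 p.2) /\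
   (forall p q, p \in M -> q \in M -> (p.1 = q.1 \/ p.2 = q.2) -> p = q)) (Hm M).
Proof.
apply: (iffP andP) => [[/forall_inP H1 /forall_inP H2]|[H1 H2]]; split.
- exact: H1.
- move=> p q pM qM H; apply/eqP.
  move: (H2 p pM) => /forall_inP/(_ q qM)/implyP; apply.
  by case: H => ->; rewrite eqxx ?orbT.
- by apply/forall_inP.
- apply/forall_inP => p pM; apply/forall_inP => q qM; apply/implyP => /orP H.
  by apply/eqP; apply: H2 => //; case: H => /eqP; auto.
Qed.

Variable M : {set T * T}.
Hypothesis HmM : Hm M.
Hypothesis maxM : forall M', Hm M' -> #|M'| <= #|M|.

Definition stepr a a' := [exists b, hE a b && ((a', b) \in M)].
Definition unm a := (a \in C) && [forall b, (a, b) \notin M].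
Definition Rs := [set a | [exists a0, unm a0 && connect stepr a0 a]].

Definition Inv x (Vis : seq T) := exists M', [/\ Hm M', #|M'| = #|M|,
  (forall b, (x, b) \notin M'),
  (forall a b, (a, b) \in M' -> exists a', (a', b) \in M) &
  (forall a b, a \notin Vis -> (a, b) \in M -> (a, b) \in M')].

Lemma step_inv x y Vis : stepr x y -> x != y -> y \notin Vis -> Inv x Vis ->
  Inv y (y :: Vis).
Proof.
move=> /existsP[b /andP[hxb yb]] xy yV [M' [HM' cM' xun Bs pres]].
have yb' : (y, b) \in M' by apply: pres.
have [H1 H2] := HmP _ HM'.
exists ((x, b) |: (M' :\ (y, b))); split.
- apply/HmP; split.
  + by move=> p; rewrite !inE => /orP[/eqP->|/andP[_ /H1]].
  + move=> p q; rewrite !inE => /orP[/eqP->|/andP[pn pM]] /orP[/eqP->|/andP[qn qM]] //=.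
    * case=> [E|E].
        by move: (xun q.2); rewrite E -surjective_pairing qM.
      by move: qn; rewrite (H2 q (y, b)) ?eqxx //; right.
    * case=> [E|E].
        by move: (xun p.2); rewrite -E -surjective_pairing pM.
      by move: pn; rewrite (H2 p (y, b)) ?eqxx //; right.
    * exact: H2.
- rewrite cardsU1 !inE negb_and xun orbT /= (cardsD1 (y, b) M') yb' in cM' *.
  by rewrite -cM'.
- move=> b'; rewrite !inE negb_or; apply/andP; split.
    by rewrite xpair_eqE negb_and eq_sym xy.
  rewrite negb_and negbK; apply/orP; case: (eqVneq b' b) => [->|nb]; first by left.
  right; apply/negP => yb2; move: nb; have [] := H2 (y, b') (y, b) yb2 yb' (or_introl erefl).
  by move=> ->; rewrite eqxx.
- move=> a b'; rewrite !inE => /orP[/eqP[_ ->]|/andP[_ /Bs]] //; by exists y.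
- move=> a b'; rewrite inE negb_or => /andP[ay aV] abM.
  rewrite !inE (pres a b') // andbT orbC; apply/orP; left.
  by rewrite xpair_eqE negb_and ay.
Qed.

Lemma walk p : forall x Vis, path stepr x p -> uniq (x :: p) ->
  {in p, forall z, z \notin Vis} -> Inv x Vis ->
  exists M', [/\ Hm M', #|M'| = #|M|,
  (forall b, (last x p, b) \notin M') &
  (forall a b, (a, b) \in M' -> exists a', (a', b) \in M)].
Proof.
elim: p => [|y p IH] x Vis /=.
  move=> _ _ _ [M' [A1 A2 A3 A4 _]]; by exists M'; split.
move=> /andP[sxy pth] /andP[xn un] nV Ix.
apply: (IH y (y :: Vis)) => //.
- move=> z zp; rewrite inE negb_or; apply/andP; split.
    by apply/eqP => E; move: un; rewrite /= -E zp.
  by apply: nV; rewrite inE zp orbT.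
- apply: step_inv Ix => //.
    by apply/eqP => E; move: xn; rewrite E inE eqxx.
  by apply: nV; rewrite inE eqxx.
Qed.

Lemma mainlem a b : a \in Rs -> hE a b -> exists a', (a', b) \in M.
Proof.
move=> aR hab; case: (boolP [exists a', (a', b) \in M]) => [/existsP[a' H]|nm].
  by exists a'.
exfalso.
move: aR hab; rewrite inE => /existsP[a0 /andP[ua0 /connectP[p pth ->]]].
case: (shortenP pth) => p' pth' up' _ hab.
have I0 : Inv a0 [::].
  exists M; split => //.
    by move=> b'; move: ua0 => /andP[_ /forallP].
  by move=> a1 b1 H; exists a1.
have [M' [HM' cM' un Bs]] := walk pth' up' (fun z _ => isT : z \notin [::]) I0.
set a1 := last a0 p' in un hab *.
have bfree : forall a2, (a2, b) \notin M'.
  move=> a2; apply/negP => /Bs[a3 H]; move: nm => /existsP; apply; by exists a3.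
have [H1 H2] := HmP _ HM'.
have : Hm ((a1, b) |: M').
  apply/HmP; split.
    by move=> q; rewrite !inE => /orP[/eqP->|/H1].
  move=> q r; rewrite !inE => /orP[/eqP->|qM] /orP[/eqP->|rM] //=.
  - case=> E; [move: (un r.2)|move: (bfree r.1)];
      by rewrite ?E -surjective_pairing rM.
  - case=> E; [move: (un q.2)|move: (bfree q.1)];
      by rewrite -?E -surjective_pairing qM.
  - exact: H2.
move/maxM; rewrite cardsU1 un cM' add1n ltnn //.
Qed.


Definition NR := [set b | [exists a, (a \in Rs) && hE a b]].
Definition Zs := (C :\: Rs) :|: NR.

Lemma Zcover u v : hE u v -> (u \in Zs) || (v \in Zs).
Proof.
move=> huv; case: (boolP (u \in Rs)) => uR.
  by rewrite !inE; apply/orP; right; apply/orP; right; apply/existsP; exists u; rewrite uR.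
move: (huv) => /and3P[_ uC _]; move: uR; rewrite /Zs !inE uC andbT => -> //.
Qed.

Lemma Zcard : #|Zs| <= #|M|.
Proof.
have [H1 H2] := HmP _ HmM.
set M1 := M :\: [set p | p.1 \in Rs]; set M2 := M :&: [set p | p.1 \in Rs].
have s1 : C :\: Rs \subset fst @: M1.
  apply/subsetP => z; rewrite !inE => /andP[zR zC].
  case: (boolP [exists b, (z, b) \in M]) => [/existsP[b zb]|nz].
    by apply/imsetP; exists (z, b) => //; rewrite !inE zb andbT /= zR.
  exfalso; move: zR; apply/negP/negPn/existsP; exists z.
  rewrite connect0 andbT /unm zC /=; apply/forallP => b; apply/negP => zb.
  by move: nz => /existsP; apply; exists b.
have s2 : NR \subset snd @: M2.
  apply/subsetP => b; rewrite inE => /existsP[a /andP[aR hab]].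
  have [a' ab] := mainlem aR hab.
  apply/imsetP; exists (a', b) => //; rewrite !inE ab /=.
  move: aR; rewrite inE => /existsP[a0 /andP[u0 c0]]; apply/existsP; exists a0.
  rewrite u0 /=; apply: (connect_trans c0); apply: connect1.
  by apply/existsP; exists b; rewrite hab ab.
rewrite -(cardsID [set p | p.1 \in Rs] M) -/M1 -/M2 addnC.
apply: (leq_trans (leq_card_setU _ _).1); apply: leq_add.
  exact: (leq_trans (subset_leq_card s1) (leq_imset_card _ _)).
exact: (leq_trans (subset_leq_card s2) (leq_imset_card _ _)).
Qed.

End Konig.

Lemma Hm_matching (T : finType) (e : rel T) (C : {set T}) (M : {set T * T}) :
  Hm e C M -> matching e M.
Proof.
move=> /HmP[H1 H2]; apply/andP; split.
  by apply/forall_inP => p /H1 /and3P[].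
apply/forall_inP => p pM; apply/forall_inP => q qM; apply/implyP => pq.
have [_ p1C p2C] := and3P (H1 p pM); have [_ q1C q2C] := and3P (H1 q qM).
apply/and4P; split.
- by apply/eqP => E; move: pq; rewrite (H2 p q) ?eqxx //; left.
- by apply/eqP => E; move: q2C; rewrite -E p1C.
- by apply/eqP => E; move: p2C; rewrite E q1C.
- by apply/eqP => E; move: pq; rewrite (H2 p q) ?eqxx //; right.
Qed.

From mathcomp Require Import classical_sets reals.
From mathcomp Require Import lra.
Import Order.TTheory GRing.Theory Num.Theory.
Unset Implicit Arguments.
Local Open Scope ring_scope.

Theorem lemma1 (R : realType) (T : finType) (e : rel T)
    (esym : symmetric e) (eirr : irreflexive e) :
  (2 * LP e R - (MM e)%:R <= (OPT e)%:R :> R)%R.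
Proof.
have [C Ccov CO] : exists2 C, vertex_cover e C & (#|C| <= OPT e)%N.
  rewrite /OPT; apply: (big_ind (fun n => exists2 C, vertex_cover e C & (#|C| <= n)%N)).
  - exists [set: T]%SET; last by rewrite cardsT.
    by apply/forallP => u; apply/forallP => v; rewrite finset.in_setT implybT.
  - move=> x y [C1 h1 l1] [C2 h2 l2]; case: (leqP x y) => xy /=.
      by exists C1.
    by exists C2.
  - by move=> C hC; exists C.
have Hm0 : Hm e C (finset.set0 : {set T * T}) by apply/HmP; split => p; rewrite inE.
case: (@arg_maxnP _ (finset.set0 : {set T * T}) (Hm e C) (fun M => #|M|) Hm0) => M HmM maxM.
have MMM : (#|M| <= MM e)%N by apply: leq_bigmax_cond; apply: Hm_matching HmM.
have Zc := Zcard HmM maxM.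
set Z := Zs e C M in Zc.
pose x := fun v : T => (if v \in C then 1/2 else 0) + (if v \in Z then 1/2 else 0) : R.
have feas : LP_feasible e x.
  split; last first.
    by move=> v; rewrite /x; case: (v \in C); case: (v \in Z); apply/andP; split; lra.
  move=> u v euv; have := Ccov; move=> /forallP/(_ u)/forallP/(_ v)/implyP/(_ euv) cov.
  rewrite /x; case: (boolP (u \in C)) => uC; case: (boolP (v \in C)) => vC.
  - by case: (u \in Z); case: (v \in Z); lra.
  - have : hE e C u v by rewrite /hE euv uC vC.
    move=> /(@Zcover _ e C M); rewrite -/Z.
    by case: (u \in Z); case: (v \in Z) => //= _; lra.
  - have : hE e C v u by rewrite /hE esym euv uC vC.
    move=> /(@Zcover _ e C M); rewrite -/Z.
    by case: (u \in Z); case: (v \in Z) => //= _; lra.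
  - by move: cov; rewrite (negbTE uC) (negbTE vC).
have sumx : \sum_(v : T) x v = (#|C|%:R + #|Z|%:R) / 2.
  rewrite big_split /= -!big_mkcond /= !sumr_const; lra.
have LPle : LP e R <= \sum_(v : T) x v.
  apply: ge_inf; last by exists x.
  exists 0 => s [y [[_ yb] ->]]; apply: sumr_ge0 => v _; by case/andP: (yb v).
have h1 : (#|C|%:R <= (OPT e)%:R :> R) by rewrite ler_nat.
have h2 : (#|Z|%:R <= (MM e)%:R :> R) by rewrite ler_nat (leq_trans Zc MMM).
lra.
Qed.
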